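(* For every finite field $\mathbb{F}_q$, the unit-graph on $\operatorname{Mat}_2(\mathbb{F}_q)$ is a strongly regular graph with parameters $(q^4,\; q^4-q^3-q^2+q,\; q^4-2q^3-q^2+3q,\; q^4-2q^3+q)$.
   Context: The unit-graph on $\operatorname{Mat}_2(\mathbb{F}_q)$ is the graph with vertex set $\operatorname{Mat}_2(\mathbb{F}_q)$ in which $A$ and $B$ are adjacent iff $B - A \in \operatorname{GL}_2(\mathbb{F}_q)$. A non-empty, non-complete regular graph is strongly regular with parameters $(n,k,a,c)$ if it has $n$ vertices, is $k$-regular, every pair of distinct adjacent vertices has exactly $a$ common neighbours, and every pair of distinct nonadjacent vertices has exactly $c$ common neighbours. *)

(* Defs.v *)
From HB Require Import structures.
From mathcomp Require Import all_boot all_order all_algebra all_field.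
Set Implicit Arguments. Unset Strict Implicit. Unset Printing Implicit Defensive.
Import GRing.Theory Num.Theory.
Local Open Scope ring_scope.

(* Unit-graph on 'M[F]_2 : A ~ B iff B - A is invertible.
   (Irreflexive automatically since 0 is not invertible; we keep the
   literal definition from the paper.) *)
Definition unit_graph (F : finFieldType) : rel 'M[F]_2 :=
  fun A B => (B - A) \in unitmx.

Definition strongly_regular (T : finType) (e : rel T) (n k a c : nat) : Prop :=
  [/\ #|T| = n,
      (exists x y, e x y) &
      (exists x y, x != y /\ ~~ e x y)] /\
  [/\ (forall x, #|[set y | e x y]| = k),
      (forall x y, x != y -> e x y -> #|[set z | e x z && e y z]| = a) &
      (forall x y, x != y -> ~~ e x y -> #|[set z | e x z && e y z]| = c)].

(* Main.v *)
Require Import Defs.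
From HB Require Import structures.
From mathcomp Require Import all_boot all_order all_algebra all_field.
From mathcomp Require Import ring zify.
Import GRing.Theory Num.Theory.
Local Open Scope ring_scope.

Lemma card_inj_pre (T : finType) (h : T -> T) (R : pred T) :
  injective h -> #|[set w | R (h w)]| = #|[set w | R w]|.
Proof.
move=> hI; rewrite -(card_preimset [set w | R w] hI); apply: eq_card => w.
by rewrite !inE.
Qed.

Lemma card_prodP (T1 T2 : finType) (P : pred (T1 * T2)) :
  #|[set p | P p]| = (\sum_x #|[set y | P (x, y)]|)%N.
Proof.
transitivity (\sum_x \sum_y (if P (x, y) then 1%N else 0%N))%N; last first.
  apply: eq_bigr => x _; rewrite -sum1_card [RHS]big_mkcond /=.
  by apply: eq_bigr => y _; rewrite inE.
rewrite pair_bigA /= -sum1_card big_mkcond /=.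
by apply: eq_bigr => -[x y] _; rewrite inE.
Qed.

Lemma sum_bool (T : finType) (b : pred T) (c : nat) :
  (\sum_x (b x * c) = #|[set x | b x]| * c)%N.
Proof.
rewrite -big_distrl /=; congr (_ * _)%N; rewrite -sum1_card [RHS]big_mkcond /=.
by apply: eq_bigr => x _; rewrite inE; case: (b x).
Qed.

Lemma card_mul (F : finFieldType) (t : F) :
  #|[set p : F * F | p.1 * p.2 == t]| = (#|F|.-1 + (t == 0%R) * #|F|)%N.
Proof.
rewrite card_prodP (bigD1 0) //= addnC; congr (_ + _)%N.
  rewrite (eq_bigr (fun _ => 1%N)); last first.
    move=> x x0; rewrite -(cards1 (t / x)); apply: eq_card => y.
    rewrite !inE; apply/eqP/eqP => [<-|->]; first by rewrite mulrC mulKf.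
    by rewrite mulrC divfK.
  by rewrite -(cardC1 0) -sum1_card; apply: eq_bigl => y; rewrite !inE.
rewrite (eq_card (B := [set y : F | t == 0])); last by move=> y; rewrite !inE mul0r eq_sym.
by case: (t == 0); rewrite ?cardsT ?cards0 ?mul1n ?mul0n.
Qed.

Lemma det2 (F : comNzRingType) (A : 'M[F]_2) : \det A = A 0 0 * A 1 1 - A 0 1 * A 1 0.
Proof.
rewrite (expand_det_row _ 0) !big_ord_recl big_ord0 /cofactor !det_mx11 /=.
rewrite !mxE /=.
have -> : lift (0:'I_2) (0:'I_1) = 1 by apply/val_inj.
have -> : lift (1:'I_2) (0:'I_1) = 0 by apply/val_inj.
by rewrite /bump /= expr0 expr1 addr0 mul1r mulN1r mulrN.
Qed.

Definition mk (F : finFieldType) (p : (F * F) * (F * F)) : 'M[F]_2 :=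
  \matrix_(i, j) if i == 0 then (if j == 0 then p.1.1 else p.2.1)
                 else (if j == 0 then p.2.2 else p.1.2).
Definition unmk (F : finFieldType) (A : 'M[F]_2) : (F * F) * (F * F) :=
  ((A 0 0, A 1 1), (A 0 1, A 1 0)).

Arguments mk {F}.
Arguments unmk {F}.

Lemma mkK (F : finFieldType) : cancel (@mk F) (@unmk F).
Proof. by move=> [[a d] [b c]]; rewrite /unmk !mxE. Qed.

Lemma unmkK (F : finFieldType) : cancel (@unmk F) (@mk F).
Proof.
move=> A; apply/matrixP => i j; rewrite !mxE /=.
by case: i => [[|[|i]] Hi] //; case: j => [[|[|j]] Hj] //=;
   congr (A _ _); apply: val_inj.
Qed.

Lemma card_mx_pred (F : finFieldType) (P : pred 'M[F]_2) :
  #|[set A | P A]| = #|[set p | P (mk p)]|.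
Proof.
rewrite -(card_imset _ (can_inj (@mkK F))); apply: eq_card => A.
rewrite inE; apply/idP/imsetP => [PA | [p]]; last by rewrite inE => Pp ->.
by exists (unmk A); rewrite ?inE unmkK.
Qed.

Lemma det_mk (F : finFieldType) p : \det (@mk F p) = p.1.1 * p.1.2 - p.2.1 * p.2.2.
Proof. by rewrite det2 !mxE. Qed.

Lemma mk_sub1 (F : finFieldType) p :
  @mk F p - 1%:M = mk ((p.1.1 - 1, p.1.2 - 1), p.2).
Proof.
apply/matrixP => i j; rewrite !mxE.
by case: i => [[|[|i]] Hi] //; case: j => [[|[|j]] Hj] //=; rewrite ?subr0.
Qed.

Lemma mk_subE (F : finFieldType) p :
  @mk F p - pid_mx 1 = mk ((p.1.1 - 1, p.1.2), p.2).
Proof.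
apply/matrixP => i j; rewrite !mxE.
by case: i => [[|[|i]] Hi] //; case: j => [[|[|j]] Hj] //=; rewrite ?subr0.
Qed.

Lemma card_sing (F : finFieldType) :
  #|[set A : 'M[F]_2 | A \notin unitmx]| =
  (#|F| * #|F| * #|F|.-1 + (#|F|.-1 + #|F|) * #|F|)%N.
Proof.
rewrite card_mx_pred.
rewrite (eq_card (B := [set p : (F * F) * (F * F) | p.1.1 * p.1.2 - p.2.1 * p.2.2 == 0])); last first.
  by move=> p; rewrite !inE unitmxE unitfE negbK det_mk.
rewrite card_prodP.
rewrite (eq_bigr (fun x : F * F => #|F|.-1 + (x.1 * x.2 == 0 :> F)%R * #|F|)%N); last first.
  move=> x _; rewrite -card_mul; apply: eq_card => y; rewrite !inE subr_eq0 eq_sym.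
  by [].
rewrite big_split /= sum_bool sum_nat_const card_mul eqxx mul1n.
by rewrite cardT /= -cardE card_prod.
Qed.

Lemma card_M1 (F : finFieldType) :
  #|[set A : 'M[F]_2 | (A \notin unitmx) && (A - 1%:M \notin unitmx)]| =
  (#|F| * #|F|.-1 + 2 * #|F|)%N.
Proof.
rewrite card_mx_pred.
rewrite (eq_card (B := [set p : (F * F) * (F * F) |
   (p.1.1 * p.1.2 - p.2.1 * p.2.2 == 0) &&
   ((p.1.1 - 1) * (p.1.2 - 1) - p.2.1 * p.2.2 == 0)])); last first.
  by move=> p; rewrite !inE !unitmxE !unitfE !negbK mk_sub1 !det_mk.
rewrite card_prodP.
rewrite (eq_bigr (fun x : F * F => (x.1 + x.2 == 1 :> F)%R *
                    (#|F|.-1 + (x.1 * x.2 == 0 :> F)%R * #|F|))%N); last first.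
  move=> x _; have E : (x.1 - 1) * (x.2 - 1) = x.1 * x.2 + (1 - (x.1 + x.2)) by ring.
  case: eqP => H.
    rewrite mul1n -card_mul; apply: eq_card => y.
    by rewrite !inE E H subrr addr0 andbb subr_eq0 eq_sym.
  rewrite mul0n; apply/eqP; rewrite cards_eq0; apply/eqP/setP => y.
  rewrite !inE E; apply/negP => /andP[/eqP H1 /eqP H2]; apply: H.
  move: H2; rewrite addrAC H1 add0r => /eqP; rewrite subr_eq0 => /eqP.
  by [].
rewrite -(pair_bigA _ (fun a b => ((a + b == 1 :> F)%R *
                    (#|F|.-1 + (a * b == 0 :> F)%R * #|F|))%N)) /=.
rewrite (eq_bigr (fun a : F => #|F|.-1 + (a * (1 - a) == 0 :> F)%R * #|F|))%N; last first.
  move=> a _; rewrite (bigD1 (1 - a)) //= addrC subrK eqxx mul1n big1 ?addn0 //.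
  move=> b Hb; suff -> : (a + b == 1) = false by [].
  by apply/negP => /eqP H; move: Hb; rewrite -H addrC addKr eqxx.
rewrite big_split /= sum_bool sum_nat_const cardT /= -cardE.
have -> : #|[set x : F | x * (1 - x) == 0]| = 2%N.
  have -> : 2%N = #|[set (0 : F); 1]| by rewrite cards2 eq_sym oner_neq0.
  apply: eq_card => a.
  by rewrite !inE mulf_eq0 subr_eq0 (eq_sym 1).
by [].
Qed.

Lemma card_ME (F : finFieldType) :
  #|[set A : 'M[F]_2 | (A \notin unitmx) && (A - pid_mx 1 \notin unitmx)]| =
  (#|F| * (#|F|.-1 + #|F|))%N.
Proof.
rewrite card_mx_pred.
rewrite (eq_card (B := [set p : (F * F) * (F * F) |
   (p.1.1 * p.1.2 - p.2.1 * p.2.2 == 0) &&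
   ((p.1.1 - 1) * p.1.2 - p.2.1 * p.2.2 == 0)])); last first.
  by move=> p; rewrite !inE !unitmxE !unitfE !negbK mk_subE !det_mk.
rewrite card_prodP.
rewrite (eq_bigr (fun x : F * F => (x.2 == 0 :> F)%R * (#|F|.-1 + #|F|)))%N; last first.
  move=> x _; have E : (x.1 - 1) * x.2 = x.1 * x.2 - x.2 by ring.
  case: eqP => H.
    rewrite mul1n; have := @card_mul F 0; rewrite eqxx mul1n => <-.
    apply: eq_card => y.
    by rewrite !inE E H subr0 andbb mulr0 subr_eq0 eq_sym.
  rewrite mul0n; apply/eqP; rewrite cards_eq0; apply/eqP/setP => y.
  rewrite !inE E; apply/negP => /andP[/eqP H1 /eqP H2]; apply: H.
  move: H2; rewrite addrAC H1 add0r => /eqP; rewrite oppr_eq0 => /eqP.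
  by [].
rewrite sum_bool; congr (_ * _)%N.
rewrite card_prodP (eq_bigr (fun _ => 1%N)) ?sum1_card ?cardT /= -?cardE //.
by move=> a _; rewrite -(cards1 (0 : F)); apply: eq_card => b; rewrite !inE.
Qed.

Definition Ncnt (F : finFieldType) (D : 'M[F]_2) :=
  #|[set w : 'M[F]_2 | (w \in unitmx) && (w - D \in unitmx)]|.
Arguments Ncnt {F}.

Lemma N_incl (F : finFieldType) (D : 'M[F]_2) :
  (Ncnt D + 2 * #|[set A : 'M[F]_2 | A \notin unitmx]| =
   #|{: 'M[F]_2}| + #|[set w : 'M[F]_2 | (w \notin unitmx) && ((w - D)%R \notin unitmx)]|)%N.
Proof.
set U := [set w : 'M[F]_2 | w \notin unitmx].
set V := [set w : 'M[F]_2 | w - D \notin unitmx].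
have HV : #|V| = #|U|.
  rewrite /U /V; rewrite -(@card_inj_pre _ _ (fun w : 'M[F]_2 => w \notin unitmx) (addIr (- D))).
  by apply: eq_card => w; rewrite !inE.
have HI : #|[set w : 'M[F]_2 | (w \notin unitmx) && (w - D \notin unitmx)]| = #|U :&: V|.
  by apply: eq_card => w; rewrite !inE.
have HN : Ncnt D = #|~: (U :|: V)|.
  by apply: eq_card => w; rewrite !inE negb_or !negbK.
have := cardsUI U V; have := cardsC (U :|: V).
rewrite HI HN -HV => H1 H2; rewrite -H1; lia.
Qed.

Lemma N_equiv (F : finFieldType) (P D Q : 'M[F]_2) :
  P \in unitmx -> Q \in unitmx -> Ncnt (P *m D *m Q) = Ncnt D.
Proof.
move=> uP uQ; rewrite /Ncnt.
have hI : injective (fun w : 'M[F]_2 => P *m w *m Q).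
  move=> w1 w2 /(congr1 (mulmx^~ (invmx Q))); rewrite !mulmxK //.
  by move/(congr1 (mulmx (invmx P))); rewrite !mulKmx.
rewrite -(@card_inj_pre _ _ (fun w => (w \in unitmx) && (w - P *m D *m Q \in unitmx)) hI).
apply: eq_card => w; rewrite !inE. rewrite -mulmxBl -mulmxBr !unitmx_mul uP uQ /=.
by rewrite !andbT.
Qed.

Lemma N_rank (F : finFieldType) (D : 'M[F]_2) : Ncnt D = Ncnt (pid_mx (\rank D) : 'M[F]_2).
Proof.
by rewrite -{1}(mulmx_ebase D) N_equiv ?col_ebase_unit ?row_ebase_unit.
Qed.

Lemma deg_eq (F : finFieldType) (x : 'M[F]_2) :
  #|[set y | unit_graph x y]| = #|[set y : 'M[F]_2 | y \in unitmx]|.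
Proof.
exact: (@card_inj_pre _ _ (fun w : 'M[F]_2 => w \in unitmx) (addIr (- x))).
Qed.

Lemma common_eq (F : finFieldType) (x y : 'M[F]_2) :
  #|[set z | unit_graph x z && unit_graph y z]| = Ncnt (y - x).
Proof.
rewrite /Ncnt -(@card_inj_pre _ _ (fun w : 'M[F]_2 => (w \in unitmx) && (w - (y - x) \in unitmx)) (addIr (- x))).
apply: eq_card => z; rewrite !inE /unit_graph.
by rewrite opprB addrA subrK.
Qed.

Theorem theorem3p5 (F : finFieldType) :
  let q : int := (#|F|)%:Z in
  exists n k a c : nat,
    [/\ n%:Z = q ^+ 4,
        k%:Z = q ^+ 4 - q ^+ 3 - q ^+ 2 + q,
        a%:Z = q ^+ 4 - 2 * q ^+ 3 - q ^+ 2 + 3 * q,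
        c%:Z = q ^+ 4 - 2 * q ^+ 3 + q &
        strongly_regular (@unit_graph F) n k a c].
Proof.
move=> q.
exists #|{: 'M[F]_2}|, #|[set y : 'M[F]_2 | y \in unitmx]|,
  (Ncnt (1%:M : 'M[F]_2)), (Ncnt (pid_mx 1 : 'M[F]_2)).
have q0 : (0 < #|F|)%N by apply/card_gt0P; exists 0.
have Hn : #|{: 'M[F]_2}| = (#|F| ^ 4)%N by rewrite card_mx.
have HS := card_sing F.
have Hk : (#|[set y : 'M[F]_2 | y \in unitmx]| + #|[set A : 'M[F]_2 | A \notin unitmx]| = #|F| ^ 4)%N.
  rewrite -Hn -(cardsC [set y : 'M[F]_2 | y \in unitmx]); congr (_ + _)%N.
  by apply: eq_card => w; rewrite !inE.
have Ha := N_incl F (1%:M : 'M[F]_2); rewrite card_M1 HS Hn in Ha.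
have Hc := N_incl F (pid_mx 1 : 'M[F]_2); rewrite card_ME HS Hn in Hc.
rewrite HS in Hk.
split.
- rewrite Hn /q !exprS expr0 !mulr1; nia.
- rewrite /q !exprS expr0 !mulr1; nia.
- rewrite /q !exprS expr0 !mulr1; nia.
- rewrite /q !exprS expr0 !mulr1; nia.
split; [split|split].
- by [].
- by exists 0, 1; rewrite /unit_graph subr0 unitmx1.
- exists 0, (pid_mx 1); split.
    apply/eqP => /(congr1 (fun A : 'M[F]_2 => A 0 0)); rewrite !mxE /=.
    by move/eqP; rewrite eq_sym oner_eq0.
  rewrite /unit_graph subr0 -row_free_unit /row_free rank_pid_mx //.
- by move=> x; rewrite deg_eq.
- move=> x y xy exy; rewrite common_eq N_rank mxrank_unit //.
  by rewrite pid_mx_1.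
- move=> x y xy nexy; rewrite common_eq N_rank.
  have -> : \rank (y - x) = 1%N.
    have h1 : \rank (y - x) != 0%N by rewrite mxrank_eq0 subr_eq0 eq_sym.
    have h2 : \rank (y - x) != 2%N by rewrite -/(row_free _) row_free_unit.
    have := rank_leq_row (y - x); lia.
  by [].
Qed.
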